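(* Let $k\ge1$ and let $p=(p_1,\dots,p_n)$ be a parking function. Then the permutation $\pi(p)$ avoids the pattern $(k+1)k\cdots1$ if and only if the word $p_1\cdots p_n$ avoids $(k+1)k\cdots 1$ as a word, i.e. there are no indices $i_1<\dots<i_{k+1}$ with $p_{i_1}>p_{i_2}>\dots>p_{i_{k+1}}$.
   Context: $[n]=\{1,\dots,n\}$. A tuple $p\in[n]^n$ is a parking function if its weakly increasing rearrangement $(p'_1,\dots,p'_n)$ satisfies $p'_i\le i$ for all $i$. $\pi(p)$ is the permutation obtained by listing, for $s=1,\dots,n$ in turn, the indices $j$ with $p_j=s$ in increasing order, and concatenating. A permutation avoids $\sigma\in\mathfrak S_m$ if none of its length-$m$ subsequences is order-isomorphic to $\sigma$. *)

(* Defs.v *)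
From mathcomp Require Import all_boot.
Unset Printing Implicit Defensive.

(* Words/tuples are seq nat; positions are 0-based internally, values as in paper
   (1-based, p_j in [n] = {1..n}). *)

Definition is_parking_function (n : nat) (p : seq nat) : bool :=
  [&& size p == n,
      all (fun x => (1 <= x <= n)) p &
      let p' := sort leq p in
      [forall i : 'I_n, nth 0 p' i <= i.+1]].

Definition parking_perm (n : nat) (p : seq nat) : seq nat :=
  flatten [seq [seq j <- iota 1 n | nth 0 p j.-1 == s] | s <- iota 1 n].

(* The word w contains a decreasing pattern of length m: indices
   i_1 < ... < i_m with w_{i_1} > ... > w_{i_m}. For a permutation, being
   order-isomorphic to m(m-1)...1 is exactly this. *)
Definition contains_decreasing (m : nat) (w : seq nat) : Prop :=
  exists f : 'I_m -> 'I_(size w),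
    forall a b : 'I_m, a < b ->
      (f a < f b) /\ (nth 0 w (f b) < nth 0 w (f a)).

Definition avoids_decreasing (m : nat) (w : seq nat) : Prop :=
  ~ contains_decreasing m w.

(* Main.v *)
Require Import Defs.
From mathcomp Require Import all_boot.
From mathcomp Require Import zify.

Section Aux.
Variable p : seq nat.
Variable n : nat.
Definition pkey x := nth 0 p x.-1.
Definition Rk (x y : nat) : bool := (pkey x < pkey y) || ((pkey x == pkey y) && (x < y)).

Lemma R_trans : transitive Rk.
Proof.
move=> y x z; rewrite /Rk.
case/orP=> [h1|/andP[/eqP h1 h2]]; case/orP=> [h3|/andP[/eqP h3 h4]].
- by rewrite (ltn_trans h1 h3).
- by rewrite -h3 h1.
- by rewrite h1 h3.
- by rewrite h1 h3 eqxx (ltn_trans h2 h4) orbT.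
Qed.

Definition blk s := [seq j <- iota 1 n | pkey j == s].

Lemma pw_block s : pairwise Rk (blk s).
Proof.
apply: (@sub_in_pairwise _ (fun x => pkey x == s) ltn).
- move=> x y /eqP hx /eqP hy hxy; by rewrite /Rk hx hy eqxx; apply/orP; right; exact: hxy.
- by apply/allP=> x; rewrite mem_filter => /andP[].
- apply: pairwise_filter; rewrite -sorted_pairwise; last exact: ltn_trans.
  exact: iota_ltn_sorted.
Qed.

Lemma pw_flat l : forall a, pairwise Rk (flatten [seq blk s | s <- iota a l]).
Proof.
elim: l => [//|l IH] a /=.
rewrite pairwise_cat; apply/and3P; split; [|exact: pw_block|exact: IH].
apply/allrelP=> x y hx /flatten_mapP[s hs hy].
move: hx hy; rewrite !mem_filter mem_iota => /andP[/eqP hx _] /andP[/eqP hy _].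
move: hs; rewrite mem_iota => /andP[hs _].
by rewrite /Rk hx hy hs.
Qed.

Lemma perm_sorted : sorted Rk (parking_perm n p).
Proof. rewrite sorted_pairwise; [exact: pw_flat | exact: R_trans]. Qed.

Lemma perm_mem x : x \in parking_perm n p -> 0 < x <= n.
Proof.
case/flatten_mapP=> s _; rewrite mem_filter mem_iota => /andP[_ /andP[h1 h2]].
by rewrite h1 /=; lia.
Qed.

Lemma perm_pair u v : u < v < size (parking_perm n p) ->
  Rk (nth 0 (parking_perm n p) u) (nth 0 (parking_perm n p) v).
Proof.
move=> /andP[huv hv].
apply: (sorted_ltn_nth R_trans 0 perm_sorted) => //; rewrite inE //.
exact: ltn_trans huv hv.
Qed.
End Aux.

Lemma main_equiv m n p : size p = n -> all (fun x => (1 <= x <= n)) p ->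
  contains_decreasing m (parking_perm n p) <-> contains_decreasing m p.
Proof.
move=> hs hall; split.
- case=> f hf.
  set w := parking_perm n p in f hf *.
  have wP := perm_pair p n; have wM := @perm_mem p n; rewrite -/w in wP wM; clearbody w.
  have hw : forall a : 'I_m, (nth 0 w (f a)).-1 < size p.
    move=> a; have := wM (nth 0 w (f a)) (mem_nth 0 (ltn_ord (f a))); lia.
  exists (fun a => Ordinal (hw (rev_ord a))) => a b hab /=.
  have hba : rev_ord b < rev_ord a by rewrite /=; have := ltn_ord a; have := ltn_ord b; move: hab; lia.
  have [h1 h2] := hf _ _ hba.
  have hR := wP _ _ (introT andP (conj h1 (ltn_ord (f (rev_ord a))))).
  have := wM (nth 0 w (f (rev_ord a))) (mem_nth 0 (ltn_ord (f (rev_ord a)))).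
  have := wM (nth 0 w (f (rev_ord b))) (mem_nth 0 (ltn_ord (f (rev_ord b)))).
  move: hR h2; rewrite /Rk /pkey.
  set x := nth 0 w _; set y := nth 0 w _; clearbody x y.
  case/orP=> [hk|/andP[_ hxy]] hyx; last by lia.
  move=> hb ha; split; first by lia.
  exact: hk.
- case=> f hf.
  set w := parking_perm n p.
  have inw : forall i, i < size p -> i.+1 \in w.
    move=> i hi; apply/flatten_mapP; exists (nth 0 p i).
      rewrite mem_iota; have := allP hall _ (mem_nth 0 hi); case/andP=> -> h2 /=; by rewrite add1n ltnS.
    by rewrite mem_filter eqxx mem_iota /pkey /=; lia.
  have wP := perm_pair p n; rewrite -/w in wP; clearbody w.
  have hw : forall a : 'I_m, index (f a).+1 w < size w.
    by move=> a; rewrite index_mem inw.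
  exists (fun a => Ordinal (hw (rev_ord a))) => a b hab /=.
  have hba : rev_ord b < rev_ord a by rewrite /=; have := ltn_ord b; lia.
  have [h1 h2] := hf _ _ hba.
  rewrite !nth_index ?inw //; split; last by [].
  rewrite ltnNge; apply/negP => hle.
  have hne : index (f (rev_ord b)).+1 w != index (f (rev_ord a)).+1 w.
    apply/eqP=> he.
    have := congr1 (nth 0 w) he; rewrite !nth_index ?inw // => -[] /val_inj.
    by move=> e; move: h1; rewrite e ltnn.
  have hlt : index (f (rev_ord b)).+1 w < index (f (rev_ord a)).+1 w.
    by rewrite ltn_neqAle hne hle.
  have := wP _ _ (introT andP (conj hlt (hw (rev_ord a)))).
  rewrite !nth_index ?inw // /Rk /pkey /=.
  lia.
Qed.

Theorem corollary2p10 (k n : nat) (p : seq nat) :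
  1 <= k ->
  is_parking_function n p ->
  (avoids_decreasing (k.+1) (parking_perm n p) <-> avoids_decreasing (k.+1) p).
Proof.
move=> _ /and3P[/eqP hs hall _].
rewrite /avoids_decreasing; have := @main_equiv k.+1 n p hs hall; tauto.
Qed.
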